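(* For every value of the memory parameter $p\ge0$, there exist instances of the dynamics described in the context satisfying (A1)–(A3), in which every $A^t$ is a user best response to $H^t$ and every $H^{t+1}$ lies in $\arg\min_{H\in\mathcal H^m}L^t(H)$ but the service tie-breaking is not required to be sticky, together with a time $t$ such that $(H^t,A^t)$ is zero-loss while $(H^\tau,A^\tau)$ is not zero-loss for some $\tau>t$. In other words, without sticky tie-breaking, a zero-loss state at time $t$ does not guarantee zero-loss states at later times.
   Context: Setting. There are $n\ge 1$ users and $m\ge 1$ services. User $i\in\{1,\dots,n\}$ has fixed features $x_i\in\mathcal X$ and a fixed label $y_i\in\{+1,-1\}$. $\mathcal H$ is a set of classifiers $h:\mathcal X\to\{+1,-1\}$. There is a utility $u:\mathcal X\times\mathcal H\to\mathbb R$ (written $u(x,h)$) and a loss $\ell:\mathcal H\times\mathcal X\times\{+1,-1\}\to\mathbb R$ satisfying: (A1) for any $h_1,h_2\in\mathcal H$ and $x\in\mathcal X$ with $h_1(x)=-1$ and $h_2(x)=+1$, we have $u(x,h_1)\le 0<u(x,h_2)$; (A2) for all $h\in\mathcal H$ the loss is non-negative, $-y\,\ell(h,x,y)$ is strictly monotonically increasing with $u(x,h)$, and there exists $v>0$ such that $u(x,h)=0$ implies $\ell(h,x,y)=v$; (A3) (realizability) there is $h\in\mathcal H$ with $\ell(h,x_i,y_i)=0$ for all $i=1,\dots,n$. Dynamics. Fix $q>1$ and $p\ge 0$. A state at time $t$ is $(H^t,A^t)$ with $H^t=(h^t_1,\dots,h^t_m)\in\mathcal H^m$ and $A^t\in\mathbb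 R_+^{n\times m}$. Given classifiers $H$, a user best response is any $A\in\arg\max_{A\in\mathbb R_+^{n\times m}}\sum_{i=1}^n\big[\sum_{j=1}^m A_{ij}u(x_i,h_j)-\frac1q(\sum_{j=1}^m A_{ij})^q\big]$. Memory: $M^{-1}=0$ and $M^t=\frac{A^t}{1+p}+\frac{pM^{t-1}}{1+p}$ for $t\ge0$. Define $L^t(H)=\sum_{j=1}^m\sum_{i=1}^n\frac{M^t_{ij}}{\sum_{k=1}^n M^t_{kj}}\ell(h_j,x_i,y_i)$, with the fraction taken to be $0$ when $\sum_k M^t_{kj}=0$. Sticky tie-breaking (not imposed here) would mean: whenever $L^{t-1}(H^t)=L^t(H^t)$, $H^{t+1}=H^t$. $H^0$ is arbitrary. Zero-loss. A state $(H,A)$ is zero-loss if every service $j$ satisfies: (1) $A_{ij}\ell(h_j,x_i,y_i)=0$ for all $i$, and (2) $u(x_i,h_j)\le 0$ for all $i$ with $y_i=-1$. *)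

(* Defs.v *)
From Stdlib Require Import Reals Lra.
Open Scope R_scope.

Inductive sgn : Type := Pos | Neg.
Definition sgnR (s : sgn) : R := match s with Pos => 1 | Neg => -1 end.

Fixpoint rsum (n : nat) (f : nat -> R) : R :=
  match n with O => 0 | S k => rsum k f + f k end.

Definition rpow (x q : R) : R := if Rle_dec x 0 then 0 else Rpower x q.

Section Model.
Context (X : Type).
Notation Cls := (X -> sgn).

Definition assumption_A1 (HS : Cls -> Prop) (u : X -> Cls -> R) : Prop :=
  forall h1 h2 x, HS h1 -> HS h2 -> h1 x = Neg -> h2 x = Pos ->
    u x h1 <= 0 /\ 0 < u x h2.

Definition assumption_A2 (HS : Cls -> Prop) (u : X -> Cls -> R)
  (l : Cls -> X -> sgn -> R) : Prop :=
  (forall h x y, HS h -> 0 <= l h x y) /\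
  (forall h1 h2 x y, HS h1 -> HS h2 -> u x h1 < u x h2 ->
     - sgnR y * l h1 x y < - sgnR y * l h2 x y) /\
  (exists v, 0 < v /\ forall h x y, HS h -> u x h = 0 -> l h x y = v).

Definition assumption_A3 (HS : Cls -> Prop) (l : Cls -> X -> sgn -> R)
  (n : nat) (xs : nat -> X) (ys : nat -> sgn) : Prop :=
  exists h, HS h /\ forall i, (i < n)%nat -> l h (xs i) (ys i) = 0.

Definition user_obj (u : X -> Cls -> R) (n m : nat) (xs : nat -> X) (q : R)
  (H : nat -> Cls) (A : nat -> nat -> R) : R :=
  rsum n (fun i => rsum m (fun j => A i j * u (xs i) (H j))
                   - / q * rpow (rsum m (fun j => A i j)) q).

Definition nonneg_alloc (n m : nat) (A : nat -> nat -> R) : Prop :=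
  forall i j, (i < n)%nat -> (j < m)%nat -> 0 <= A i j.

Definition best_response (u : X -> Cls -> R) (n m : nat) (xs : nat -> X)
  (q : R) (H : nat -> Cls) (A : nat -> nat -> R) : Prop :=
  nonneg_alloc n m A /\
  forall A', nonneg_alloc n m A' ->
    user_obj u n m xs q H A' <= user_obj u n m xs q H A.

(* Mprev p A t = M^{t-1}; Mprev p A 0 = M^{-1} = 0. *)
Fixpoint Mprev (p : R) (A : nat -> nat -> nat -> R) (t : nat) : nat -> nat -> R :=
  match t with
  | O => fun _ _ => 0
  | S k => fun i j => A k i j / (1 + p) + p * Mprev p A k i j / (1 + p)
  end.
Definition Mem (p : R) (A : nat -> nat -> nat -> R) (t : nat) : nat -> nat -> R :=
  Mprev p A (S t).

Definition wgt (n : nat) (M : nat -> nat -> R) (i j : nat) : R :=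
  let s := rsum n (fun k => M k j) in
  if Req_EM_T s 0 then 0 else M i j / s.

Definition Lmem (l : Cls -> X -> sgn -> R) (n m : nat) (xs : nat -> X)
  (ys : nat -> sgn) (M : nat -> nat -> R) (H : nat -> Cls) : R :=
  rsum m (fun j => rsum n (fun i => wgt n M i j * l (H j) (xs i) (ys i))).

Definition in_HSm (HS : Cls -> Prop) (m : nat) (H : nat -> Cls) : Prop :=
  forall j, (j < m)%nat -> HS (H j).

(* A trajectory (H^t, A^t)_t of the dynamics, without sticky tie-breaking. *)
Definition dynamics (HS : Cls -> Prop) (u : X -> Cls -> R)
  (l : Cls -> X -> sgn -> R) (n m : nat) (xs : nat -> X) (ys : nat -> sgn)
  (q p : R) (H : nat -> nat -> Cls) (A : nat -> nat -> nat -> R) : Prop :=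
  in_HSm HS m (H 0%nat) /\
  (forall t, best_response u n m xs q (H t) (A t)) /\
  (forall t, in_HSm HS m (H (S t)) /\
     forall H', in_HSm HS m H' ->
       Lmem l n m xs ys (Mem p A t) (H (S t)) <= Lmem l n m xs ys (Mem p A t) H').

Definition zero_loss (u : X -> Cls -> R) (l : Cls -> X -> sgn -> R)
  (n m : nat) (xs : nat -> X) (ys : nat -> sgn)
  (H : nat -> Cls) (A : nat -> nat -> R) : Prop :=
  forall j, (j < m)%nat ->
    (forall i, (i < n)%nat -> A i j * l (H j) (xs i) (ys i) = 0) /\
    (forall i, (i < n)%nat -> ys i = Neg -> u (xs i) (H j) <= 0).

End Model.

(* Main.v *)
Require Import Defs.
From Stdlib Require Import Reals Lra Lia.
Open Scope R_scope.

Definition uu (x : unit) (h : unit -> sgn) : R :=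
  match h x with Pos => 1 | Neg => -1 end.
Definition ll (h : unit -> sgn) (x : unit) (y : sgn) : R :=
  match y, h x with Neg, Pos => 2 | Neg, Neg => 0 | Pos, Pos => 0 | Pos, Neg => 2 end.
Definition HH (t j : nat) : unit -> sgn :=
  match t with 1%nat => fun _ => Pos | _ => fun _ => Neg end.
Definition AA (t i j : nat) : R := match t with 1%nat => 1 | _ => 0 end.

Lemma rpow_ge0 x q : 0 <= rpow x q.
Proof. unfold rpow; destruct Rle_dec; [lra|]. unfold Rpower; left; apply exp_pos. Qed.

Lemma wgt_ge0 M : 0 <= wgt 1 M 0 0.
Proof.
  unfold wgt; cbn [rsum]; destruct Req_EM_T as [e|e]; [lra|].
  replace (M 0%nat 0%nat / (0 + M 0%nat 0%nat)) with 1 by (field; lra). lra.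
Qed.

Lemma ll_ge0 h x y : 0 <= ll h x y.
Proof. unfold ll; destruct y, (h x); lra. Qed.

Lemma Lmem_ge0 M H' :
  0 <= Lmem unit ll 1 1 (fun _ => tt) (fun _ => Neg) M H'.
Proof.
  unfold Lmem; cbn [rsum].
  pose proof (wgt_ge0 M); pose proof (ll_ge0 (H' 0%nat) tt Neg). nra.
Qed.

Theorem proposition3 :
  forall p : R, 0 <= p ->
  exists (X : Type) (HS : (X -> sgn) -> Prop) (u : X -> (X -> sgn) -> R)
         (l : (X -> sgn) -> X -> sgn -> R)
         (n m : nat) (xs : nat -> X) (ys : nat -> sgn) (q : R)
         (H : nat -> nat -> (X -> sgn)) (A : nat -> nat -> nat -> R),
    (1 <= n)%nat /\ (1 <= m)%nat /\ 1 < q /\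
    assumption_A1 X HS u /\ assumption_A2 X HS u l /\ assumption_A3 X HS l n xs ys /\
    dynamics X HS u l n m xs ys q p H A /\
    exists t tau : nat, (t < tau)%nat /\
      zero_loss X u l n m xs ys (H t) (A t) /\
      ~ zero_loss X u l n m xs ys (H tau) (A tau).
Proof.
  intros p hp.
  exists unit, (fun _ => True), uu, ll, 1%nat, 1%nat, (fun _ => tt), (fun _ => Neg), 2,
    HH, AA.
  split; [lia|]. split; [lia|]. split; [lra|].
  split.
  { intros h1 h2 x _ _ e1 e2. unfold uu; rewrite e1, e2; lra. }
  split.
  { split; [intros; apply ll_ge0|]. split.
    - intros h1 h2 x y _ _ hlt. unfold uu, ll in *.
      destruct (h1 x), (h2 x); try lra; destruct y; simpl; lra.
    - exists 1; split; [lra|]. intros h x y _ e. unfold uu in e.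
      destruct (h x); lra. }
  split.
  { exists (fun _ => Neg); split; [exact I|]. intros i _; reflexivity. }
  split.
  { split; [intros j _; exact I|]. split.
    - intros t. split.
      + intros i j _ _. unfold AA; destruct t as [|[|]]; lra.
      + intros A' hA'. specialize (hA' 0%nat 0%nat ltac:(lia) ltac:(lia)).
        unfold user_obj; cbn [rsum].
        destruct t as [|[|t]]; unfold HH, AA, uu.
        * pose proof (rpow_ge0 (0 + A' 0%nat 0%nat * 1) 2).
          pose proof (rpow_ge0 (0 + A' 0%nat 0%nat) 2).
          unfold rpow at 2; destruct Rle_dec; [|lra]. nra.
        * assert (r1 : rpow (0 + 1) 2 = 1).
          { unfold rpow; destruct Rle_dec; [lra|].
            replace (0+1) with 1 by ring. unfold Rpower. rewrite ln_1. rewrite Rmult_0_r. apply exp_0. }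
          rewrite r1.
          unfold rpow; destruct Rle_dec as [r|r].
          -- nra.
          -- assert (E : Rpower (0 + A' 0%nat 0%nat) 2 = A' 0%nat 0%nat ^ 2).
             { replace 2 with (INR 2) by (simpl; ring). rewrite Rpower_pow by lra. ring. }
             rewrite E. pose proof (pow2_ge_0 (A' 0%nat 0%nat - 1)). simpl in *. nra.
        * pose proof (rpow_ge0 (0 + A' 0%nat 0%nat) 2).
          unfold rpow at 2; destruct Rle_dec; [|lra]. nra.
    - intros t. split; [intros j _; exact I|]. intros H' _.
      eapply Rle_trans; [|apply Lmem_ge0].
      destruct t as [|t].
      + unfold Lmem, wgt, Mem; cbn [rsum Mprev]. unfold AA.
        destruct Req_EM_T as [e|e].
        * lra.
        * exfalso; apply e. unfold Rdiv; ring.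
      + unfold Lmem; cbn [rsum]. unfold HH, ll. lra. }
  exists 0%nat, 1%nat. split; [lia|]. split.
  - intros j _. split.
    + intros i _. unfold AA; lra.
    + intros i _ _. unfold HH, uu; lra.
  - intros Z. destruct (Z 0%nat ltac:(lia)) as [_ Z2].
    specialize (Z2 0%nat ltac:(lia) eq_refl). unfold HH, uu in Z2. lra.
Qed.
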